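(* Let $f=f_{I+1}\circ\cdots\circ f_1:\mathbb R^{d_1}\to\mathbb R^{d_3}$ be an infinite-width neural network of depth $I\ge1$, viewed as a map $f:\mathbb R^{d_1}\times\mathcal U\to\mathbb R^{d_3}$ of the input $x$ and the parameter $\mu=(\mu_0,\dots,\mu_I)\in\mathcal U$. Then $f$ is continuous (jointly in $x\in\mathbb R^{d_1}$ and $\mu\in\mathcal U$, with the product metric on $\mathbb R^{d_1}\times\mathcal U$).
   Context: Let $\mathcal X_0=\mathbb R^{d_1}$, $\mathcal X_i=\ell^2(\mathbb N)$ for $1\le i\le I$ (sequences indexed by $\{0,1,\dots\}$), $\mathcal X_{I+1}=\mathbb R^{d_3}$; $\Theta_0=\{0,\dots,d_1\}$, $\Theta_i=\mathbb N\cup\{0\}$ for $1\le i\le I$. The layer-$i$ parameter ($i=0,\dots,I$) is a vector measure $\mu_i=\sum_{m\in\Theta_i}w^{i+1}_m\delta_m$ with $w^{i+1}_m\in\mathcal X_{i+1}$ and finite total variation norm $\|\mu_i\|_{TV}=\sum_m\|w^{i+1}_m\|_{\mathcal X_{i+1}}$; these form Banach spaces $\mathcal M(\Theta_i,\mathcal X_{i+1})$, and $\mathcal U=\prod_{i=0}^I\mathcal M(\Theta_i,\mathcal X_{i+1})$ carries the product metric. With $\rho_0(x,0)=1$, $\rho_0(x,n)=x_n$ ($n=1,\dots,d_1$) and, for $i\ge1$, $\rho_i(y,0)=1$, $\rho_i(y,n)=\sigma(y_{n-1})$ ($n\ge1$), the layers are $f_i(y)=\int_{\Theta_{i-1}}\rho_{i-1}(y,\theta)\,d\mu_{i-1}(\theta)=\sum_m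 w^{i}_m\rho_{i-1}(y,m)$, i.e. $f_1(x)=W^1x+b^1$ and $f_{i+1}(y)=W^{i+1}\sigma(y)+b^{i+1}$ with $b^{i+1}=w^{i+1}_0$, $W^{i+1}y=\sum_{m\ge1}w^{i+1}_my_{m-1}$. Here $\sigma$ is the ReLU function applied componentwise. *)

(* Defs.v *)
From Stdlib Require Import Reals.
From Coquelicot Require Import Coquelicot.
Open Scope R_scope.

Definition relu (t : R) : R := Rmax 0 t.

Fixpoint fsum (n : nat) (f : nat -> R) : R :=
  match n with
  | O => 0
  | S n' => fsum n' f + f n'
  end.

(* R^d is represented by sequences v : nat -> R of which only the
   coordinates v 0, ..., v (d-1) are relevant; Euclidean norm on R^d. *)
Definition eucl_norm (d : nat) (v : nat -> R) : R :=
  sqrt (fsum d (fun k => (v k) ^ 2)).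

Definition sq_summable (u : nat -> R) : Prop := ex_series (fun n => (u n) ^ 2).
Definition l2norm (u : nat -> R) : R := sqrt (Series (fun n => (u n) ^ 2)).

(* A parameter mu = (mu_0, ..., mu_I) is encoded as
     mu i m k = k-th coordinate of the weight w^{i+1}_m in X_{i+1},
   for i = 0..I, m in Theta_i.  Theta_0 = {0..d1}, Theta_i = N (i >= 1).
   X_{i+1} = ell^2 for i < I, X_{I+1} = R^{d3}. *)

Definition tv (d1 d3 I i : nat) (w : nat -> nat -> R) : R :=
  if Nat.eqb i 0 then
    (if Nat.eqb I 0 then fsum (S d1) (fun m => eucl_norm d3 (w m))
     else fsum (S d1) (fun m => l2norm (w m)))
  else if Nat.ltb i I then Series (fun m => l2norm (w m))
  else Series (fun m => eucl_norm d3 (w m)).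

(* mu is an element of U = prod_{i=0}^I M(Theta_i, X_{i+1}):
   each weight lies in X_{i+1} and the total variation is finite. *)
Definition admissible (d1 d3 I : nat) (mu : nat -> nat -> nat -> R) : Prop :=
  (forall i m, (i < I)%nat -> sq_summable (mu i m)) /\
  (* finite total variation of mu_1, ..., mu_{I-1} (mu_0 is a finite sum) *)
  (forall i, (0 < i)%nat -> (i < I)%nat -> ex_series (fun m => l2norm (mu i m))) /\
  ((0 < I)%nat -> ex_series (fun m => eucl_norm d3 (mu I m))).

Definition param_dist (d1 d3 I : nat) (mu mu' : nat -> nat -> nat -> R) : R :=
  fsum (S I) (fun i => tv d1 d3 I i (fun m k => mu i m k - mu' i m k)).

(* feature maps: rho_0(x,0)=1, rho_0(x,n)=x_n (n=1..d1), stored 0-based as x (n-1);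
   rho_i(y,0)=1, rho_i(y,n)=sigma(y_{n-1}) *)
Definition rho0 (x : nat -> R) (m : nat) : R :=
  match m with O => 1 | S n => x n end.
Definition rho (y : nat -> R) (m : nat) : R :=
  match m with O => 1 | S n => relu (y n) end.

(* layers j : f_{j+1} o ... o f_1 (x) *)
Fixpoint layers (d1 : nat) (mu : nat -> nat -> nat -> R) (x : nat -> R) (j : nat)
  : nat -> R :=
  match j with
  | O => fun k => fsum (S d1) (fun m => mu O m k * rho0 x m)
  | S j' => fun k => Series (fun m => mu (S j') m k * rho (layers d1 mu x j') m)
  end.

Definition net (d1 I : nat) (mu : nat -> nat -> nat -> R) (x : nat -> R) : nat -> R :=
  layers d1 mu x I.

(* Main.v *)
Require Import Defs.
From Stdlib Require Import Reals Lra Lia.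
From Coquelicot Require Import Coquelicot.
Open Scope R_scope.

Lemma Series_zero (a : nat -> R) : Series (fun n => 0 * a n) = 0.
Proof. rewrite Series_scal_l; ring. Qed.

Lemma Series_nonneg' (a : nat -> R) : (forall n, 0 <= a n) -> ex_series a -> 0 <= Series a.
Proof.
  intros H E. rewrite <- (Series_zero a). apply Series_le; auto.
  intros n; split; [lra| rewrite Rmult_0_l; auto].
Qed.

Lemma sum_f_R0_term (a : nat -> R) k : (forall n, 0 <= a n) -> a k <= sum_f_R0 a k.
Proof.
  intros H. destruct k; simpl; [lra|].
  assert (0 <= sum_f_R0 a k). { apply cond_pos_sum; auto. } lra.
Qed.

Lemma term_le_Series (a : nat -> R) k : (forall n, 0 <= a n) -> ex_series a -> a k <= Series a.
Proof.
  intros H E. rewrite (Series_incr_n a (S k)). 2,3: auto with arith. change (Init.Nat.pred (S k)) with k.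
  assert (0 <= Series (fun j => a (S k + j)%nat)).
  { apply Series_nonneg'; auto. apply (ex_series_incr_n a (S k)); auto. }
  pose proof (sum_f_R0_term a k H). lra.
Qed.

Lemma coord_l2 (u : nat -> R) k : sq_summable u -> Rabs (u k) <= l2norm u.
Proof.
  intros S. unfold l2norm. rewrite <- (sqrt_pow2 (Rabs _)) by apply Rabs_pos.
  apply sqrt_le_1_alt. rewrite pow2_abs.
  apply (term_le_Series (fun n => u n ^ 2)); auto. intros; apply pow2_ge_0.
Qed.

Lemma l2norm_nonneg u : 0 <= l2norm u.
Proof. apply sqrt_pos. Qed.

Lemma eucl_nonneg d u : 0 <= eucl_norm d u.
Proof. apply sqrt_pos. Qed.

Lemma fsum_nonneg n f : (forall m, (m < n)%nat -> 0 <= f m) -> 0 <= fsum n f.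
Proof.
  induction n; simpl; intros H; [lra|].
  assert (0 <= fsum n f) by (apply IHn; intros; apply H; lia).
  specialize (H n ltac:(lia)). lra.
Qed.

Lemma fsum_le n f g : (forall m, (m < n)%nat -> f m <= g m) -> fsum n f <= fsum n g.
Proof.
  induction n; simpl; intros H; [lra|].
  assert (fsum n f <= fsum n g) by (apply IHn; intros; apply H; lia).
  specialize (H n ltac:(lia)). lra.
Qed.

Lemma fsum_term n f k : (forall m, (m < n)%nat -> 0 <= f m) -> (k < n)%nat -> f k <= fsum n f.
Proof.
  induction n; simpl; intros H Hk; [lia|].
  assert (0 <= fsum n f) by (apply fsum_nonneg; intros; apply H; lia).
  destruct (Nat.eq_dec k n) as [->|Hne]; [lra|].
  assert (f k <= fsum n f) by (apply IHn; [intros; apply H; lia| lia]).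
  specialize (H n ltac:(lia)). lra.
Qed.

Lemma fsum_plus n f g : fsum n (fun m => f m + g m) = fsum n f + fsum n g.
Proof. induction n; simpl; [ring| rewrite IHn; ring]. Qed.

Lemma fsum_scal n c f : fsum n (fun m => c * f m) = c * fsum n f.
Proof. induction n; simpl; [ring| rewrite IHn; ring]. Qed.

Lemma fsum_minus n f g : fsum n (fun m => f m - g m) = fsum n f - fsum n g.
Proof. induction n; simpl; [ring| rewrite IHn; ring]. Qed.

Lemma fsum_abs n f : Rabs (fsum n f) <= fsum n (fun m => Rabs (f m)).
Proof.
  induction n; simpl. rewrite Rabs_R0; lra.
  eapply Rle_trans; [apply Rabs_triang|]. lra.
Qed.

Lemma fsum_const n c : fsum n (fun _ => c) = INR n * c.
Proof. induction n; simpl fsum; [simpl; ring| rewrite IHn, S_INR; ring]. Qed.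

Lemma coord_eucl d v k : (k < d)%nat -> Rabs (v k) <= eucl_norm d v.
Proof.
  intros Hk. unfold eucl_norm. rewrite <- (sqrt_pow2 (Rabs _)) by apply Rabs_pos.
  apply sqrt_le_1_alt. rewrite pow2_abs.
  apply (fsum_term d (fun k => v k ^ 2)); auto. intros; apply pow2_ge_0.
Qed.

Lemma sq_le_sum d v : fsum d (fun k => v k ^ 2) <= (fsum d (fun k => Rabs (v k))) ^ 2.
Proof.
  induction d; simpl fsum; [simpl; nra|].
  assert (0 <= fsum d (fun k => Rabs (v k))) by (apply fsum_nonneg; intros; apply Rabs_pos).
  pose proof (Rabs_pos (v d)).
  assert (v d ^ 2 = Rabs (v d) ^ 2) by (rewrite pow2_abs; auto).
  set (A := fsum d (fun k => Rabs (v k))) in *.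
  set (B := fsum d (fun k => v k ^ 2)) in *. set (c := Rabs (v d)) in *.
  simpl in *. fold B. rewrite H1. nra.
Qed.

Lemma eucl_le_sum d v : eucl_norm d v <= fsum d (fun k => Rabs (v k)).
Proof.
  unfold eucl_norm. rewrite <- (sqrt_pow2 (fsum d (fun k => Rabs (v k)))).
  apply sqrt_le_1_alt, sq_le_sum. apply fsum_nonneg; intros; apply Rabs_pos.
Qed.

Lemma sq_diff_le a b : (a - b) ^ 2 <= 2 * a ^ 2 + 2 * b ^ 2.
Proof. simpl. pose proof (pow2_ge_0 (a+b)). simpl in H. nra. Qed.

Lemma sqrt_bound S SA SB : S <= 2 * SA + 2 * SB -> 0 <= SA -> 0 <= SB ->
  sqrt S <= 2 * (sqrt SA + sqrt SB).
Proof.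
  intros H HA HB.
  pose proof (sqrt_pos SA). pose proof (sqrt_pos SB).
  rewrite <- (sqrt_pow2 (2 * (sqrt SA + sqrt SB))) by lra.
  apply sqrt_le_1_alt.
  pose proof (sqrt_sqrt SA HA). pose proof (sqrt_sqrt SB HB).
  set (a := sqrt SA) in *. set (b := sqrt SB) in *. rewrite <- H2, <- H3 in H.
  assert (0 <= a * b) by (apply Rmult_le_pos; auto). simpl. nra.
Qed.

Lemma eucl_diff d u u' : eucl_norm d (fun k => u k - u' k) <= 2 * (eucl_norm d u + eucl_norm d u').
Proof.
  unfold eucl_norm. apply sqrt_bound.
  - rewrite <- !fsum_scal, <- fsum_plus. apply fsum_le; intros; apply sq_diff_le.
  - apply fsum_nonneg; intros; apply pow2_ge_0.
  - apply fsum_nonneg; intros; apply pow2_ge_0.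
Qed.

Lemma ex_series_le_R (a b : nat -> R) : (forall n, Rabs (a n) <= b n) -> ex_series b -> ex_series a.
Proof. intros H E. apply (@ex_series_le R_AbsRing R_CompleteNormedModule a b); auto. Qed.

Lemma ex_series_plus_R (a b : nat -> R) : ex_series a -> ex_series b -> ex_series (fun n => a n + b n).
Proof. intros A B. apply (@ex_series_plus R_AbsRing R_NormedModule a b); auto. Qed.

Lemma ex_series_scal_R c (a : nat -> R) : ex_series a -> ex_series (fun n => c * a n).
Proof. intros A. apply (@ex_series_scal_l R_AbsRing R_NormedModule c a); auto. Qed.

Lemma sq_summable_diff u u' : sq_summable u -> sq_summable u' -> sq_summable (fun k => u k - u' k).
Proof.
  unfold sq_summable. intros A B.
  apply (ex_series_le_R _ (fun n => 2 * u n ^ 2 + 2 * u' n ^ 2)).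
  - intros n. rewrite Rabs_pos_eq by apply pow2_ge_0. apply sq_diff_le.
  - apply ex_series_plus_R; apply ex_series_scal_R; auto.
Qed.

Lemma l2_diff u u' : sq_summable u -> sq_summable u' ->
  l2norm (fun k => u k - u' k) <= 2 * (l2norm u + l2norm u').
Proof.
  intros A B. unfold l2norm. apply sqrt_bound.
  - rewrite <- !Series_scal_l, <- Series_plus.
    + apply Series_le.
      * intros n; split; [apply pow2_ge_0| apply sq_diff_le].
      * apply ex_series_plus_R; apply ex_series_scal_R; auto.
    + apply ex_series_scal_R; auto.
    + apply ex_series_scal_R; auto.
  - apply Series_nonneg'; auto. intros; apply pow2_ge_0.
  - apply Series_nonneg'; auto. intros; apply pow2_ge_0.
Qed.

Lemma pt_bound a a' c c' b bd C D : Rabs a <= b -> Rabs (a - a') <= bd ->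
  Rabs c <= C -> Rabs (c - c') <= D -> Rabs (a * c - a' * c') <= C * bd + D * (b + bd).
Proof.
  intros Ha Hd Hc Hcd.
  replace (a * c - a' * c') with ((a - a') * c + a' * (c - c')) by ring.
  eapply Rle_trans; [apply Rabs_triang|]. rewrite !Rabs_mult.
  assert (Rabs a' <= b + bd).
  { replace a' with (a - (a - a')) by ring. eapply Rle_trans; [apply Rabs_triang|].
    rewrite Rabs_Ropp. lra. }
  pose proof (Rabs_pos (a - a')). pose proof (Rabs_pos c). pose proof (Rabs_pos a').
  pose proof (Rabs_pos (c - c')).
  assert (Rabs (a - a') * Rabs c <= bd * C) by (apply Rmult_le_compat; auto).
  assert (Rabs a' * Rabs (c - c') <= (b + bd) * D) by (apply Rmult_le_compat; auto).
  lra.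
Qed.

Lemma ser_diff (a a' c c' b bd : nat -> R) C D :
  (forall m, Rabs (a m) <= b m) -> (forall m, Rabs (a m - a' m) <= bd m) ->
  ex_series b -> ex_series bd ->
  (forall m, Rabs (c m) <= C) -> (forall m, Rabs (c m - c' m) <= D) ->
  Rabs (Series (fun m => a m * c m) - Series (fun m => a' m * c' m))
    <= C * Series bd + D * (Series b + Series bd).
Proof.
  intros Ha Hd Eb Ebd Hc Hcd.
  assert (HC : 0 <= C) by (eapply Rle_trans; [apply Rabs_pos| apply (Hc O)]).
  assert (HD : 0 <= D) by (eapply Rle_trans; [apply Rabs_pos| apply (Hcd O)]).
  assert (E1 : ex_series (fun m => a m * c m)).
  { apply (ex_series_le_R _ (fun m => C * b m)); [|apply ex_series_scal_R; auto].
    intros m. rewrite Rabs_mult, Rmult_comm. apply Rmult_le_compat; auto using Rabs_pos. }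
  assert (E2 : ex_series (fun m => a' m * c' m)).
  { apply (ex_series_le_R _ (fun m => (C + D) * (b m + bd m)));
      [|apply ex_series_scal_R, ex_series_plus_R; auto].
    intros m. rewrite Rabs_mult.
    assert (Rabs (a' m) <= b m + bd m).
    { replace (a' m) with (a m - (a m - a' m)) by ring. eapply Rle_trans; [apply Rabs_triang|].
      rewrite Rabs_Ropp. specialize (Ha m); specialize (Hd m); lra. }
    assert (Rabs (c' m) <= C + D).
    { replace (c' m) with (c m - (c m - c' m)) by ring. eapply Rle_trans; [apply Rabs_triang|].
      rewrite Rabs_Ropp. specialize (Hc m); specialize (Hcd m); lra. }
    rewrite Rmult_comm. apply Rmult_le_compat; auto using Rabs_pos. }
  assert (Eg : ex_series (fun m => C * bd m + D * (b m + bd m))).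
  { apply ex_series_plus_R; apply ex_series_scal_R; auto. apply ex_series_plus_R; auto. }
  rewrite <- Series_minus by auto.
  assert (Ep : forall m, Rabs (a m * c m - a' m * c' m) <= C * bd m + D * (b m + bd m)).
  { intros m. apply pt_bound; auto. }
  eapply Rle_trans; [apply Series_Rabs|].
    apply (ex_series_le_R _ (fun m => C * bd m + D * (b m + bd m))); auto.
    intros m; rewrite Rabs_Rabsolu; auto.
  - eapply Rle_trans; [apply Series_le; [intros m; split; [apply Rabs_pos| apply Ep]| auto]|].
    rewrite Series_plus by (try apply ex_series_scal_R; auto; apply ex_series_plus_R; auto).
    rewrite !Series_scal_l, Series_plus by auto. lra.
Qed.

Lemma fin_diff n (a a' c c' b bd : nat -> R) C D :
  (forall m, (m < n)%nat -> Rabs (a m) <= b m) ->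
  (forall m, (m < n)%nat -> Rabs (a m - a' m) <= bd m) ->
  (forall m, (m < n)%nat -> Rabs (c m) <= C) ->
  (forall m, (m < n)%nat -> Rabs (c m - c' m) <= D) ->
  Rabs (fsum n (fun m => a m * c m) - fsum n (fun m => a' m * c' m))
    <= C * fsum n bd + D * (fsum n b + fsum n bd).
Proof.
  intros Ha Hd Hc Hcd. rewrite <- fsum_minus.
  eapply Rle_trans; [apply fsum_abs|].
  rewrite <- fsum_plus, <- !fsum_scal, <- fsum_plus.
  apply fsum_le. intros m Hm. apply pt_bound; auto.
Qed.

Lemma ser_bound (a c b : nat -> R) C :
  (forall m, Rabs (a m) <= b m) -> ex_series b -> (forall m, Rabs (c m) <= C) ->
  Rabs (Series (fun m => a m * c m)) <= 3 * C * Series b.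
Proof.
  intros Ha Eb Hc.
  pose proof (ser_diff a (fun _ => 0) c (fun _ => 0) b b C C Ha) as H.
  assert (Z : Series (fun _ : nat => 0 * 0) = 0) by exact (Series_zero (fun _ => 0)).
  cbv beta in H. rewrite Z, Rminus_0_r in H. eapply Rle_trans; [apply H|]; auto.
  - intros m. rewrite Rminus_0_r; auto.
  - intros m. rewrite Rminus_0_r; auto.
  - lra.
Qed.

Lemma fin_bound n (a c b : nat -> R) C :
  (forall m, (m < n)%nat -> Rabs (a m) <= b m) -> (forall m, (m < n)%nat -> Rabs (c m) <= C) ->
  Rabs (fsum n (fun m => a m * c m)) <= 3 * C * fsum n b.
Proof.
  intros Ha Hc.
  pose proof (fin_diff n a (fun _ => 0) c (fun _ => 0) b b C C Ha) as H.
  assert (fsum n (fun _ => 0 * 0) = 0) by (rewrite (fsum_scal n 0 (fun _ => 0)); ring).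
  cbv beta in H. rewrite H0, Rminus_0_r in H. eapply Rle_trans; [apply H|]; auto.
  - intros m Hm. rewrite Rminus_0_r; auto.
  - intros m Hm. rewrite Rminus_0_r; auto.
  - lra.
Qed.

Lemma relu_abs a : Rabs (relu a) <= Rabs a.
Proof. unfold relu, Rmax. destruct (Rle_dec 0 a); unfold Rabs;
  repeat destruct Rcase_abs; lra. Qed.

Lemma relu_lip a b : Rabs (relu a - relu b) <= Rabs (a - b).
Proof. unfold relu, Rmax. destruct (Rle_dec 0 a); destruct (Rle_dec 0 b); unfold Rabs;
  repeat destruct Rcase_abs; lra. Qed.

Lemma rho_bound y M m : 0 <= M -> (forall k, Rabs (y k) <= M) -> Rabs (rho y m) <= 1 + M.
Proof.
  intros HM H. destruct m; simpl. rewrite Rabs_R1; lra.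
  eapply Rle_trans; [apply relu_abs|]. specialize (H m); lra.
Qed.

Lemma rho_lip y y' D m : 0 <= D -> (forall k, Rabs (y k - y' k) <= D) ->
  Rabs (rho y m - rho y' m) <= D.
Proof.
  intros HD H. destruct m; simpl. rewrite Rminus_eq_0, Rabs_R0; lra.
  eapply Rle_trans; [apply relu_lip|]. auto.
Qed.

Lemma rho0_bound d1 x m : (m < S d1)%nat -> Rabs (rho0 x m) <= 1 + fsum d1 (fun k => Rabs (x k)).
Proof.
  intros Hm. assert (0 <= fsum d1 (fun k => Rabs (x k))) by (apply fsum_nonneg; intros; apply Rabs_pos).
  destruct m; simpl. rewrite Rabs_R1; lra.
  assert (Rabs (x m) <= fsum d1 (fun k => Rabs (x k))).
  { apply (fsum_term d1 (fun k => Rabs (x k))); [intros; apply Rabs_pos| lia]. }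
  lra.
Qed.

Lemma rho0_lip d1 x x' m : (m < S d1)%nat ->
  Rabs (rho0 x m - rho0 x' m) <= eucl_norm d1 (fun k => x k - x' k).
Proof.
  intros Hm. destruct m; simpl. rewrite Rminus_eq_0, Rabs_R0; apply eucl_nonneg.
  apply (coord_eucl d1 (fun k => x k - x' k)). lia.
Qed.

Lemma choose_delta C B eps : 0 <= C -> 0 <= B -> 0 < eps ->
  exists delta, 0 < delta /\ forall p e, 0 <= p -> p < delta -> 0 <= e -> e < delta ->
    C * p + e * (B + p) <= eps.
Proof.
  intros HC HB He. exists (Rmin 1 (eps / (C + B + 1))). split.
  - apply Rmin_pos; [lra|]. apply Rdiv_lt_0_compat; lra.
  - intros p e Hp Hpd He0 Hed.
    pose proof (Rmin_l 1 (eps / (C + B + 1))). pose proof (Rmin_r 1 (eps / (C + B + 1))).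
    set (d := Rmin 1 (eps / (C + B + 1))) in *.
    assert (d * (C + B + 1) <= eps).
    { replace eps with ((eps / (C + B + 1)) * (C + B + 1)) by (field; lra).
      apply Rmult_le_compat_r; lra. }
    assert (C * p <= C * d) by (apply Rmult_le_compat_l; lra).
    assert (e * B <= d * B) by (apply Rmult_le_compat_r; lra).
    assert (e * p <= d * 1) by (apply Rmult_le_compat; lra).
    nra.
Qed.

Lemma tv_0 d1 d3 I w : (1 <= I)%nat -> tv d1 d3 I 0 w = fsum (S d1) (fun m => l2norm (w m)).
Proof. intros H. unfold tv. simpl. destruct I; [lia|]. reflexivity. Qed.

Lemma tv_hidden d1 d3 I i w : (0 < i)%nat -> (i < I)%nat ->
  tv d1 d3 I i w = Series (fun m => l2norm (w m)).
Proof.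
  intros H1 H2. unfold tv. destruct i; [lia|]. simpl Nat.eqb. cbv iota.
  rewrite (proj2 (Nat.ltb_lt _ _) H2). reflexivity.
Qed.

Lemma tv_out d1 d3 I w : (0 < I)%nat -> tv d1 d3 I I w = Series (fun m => eucl_norm d3 (w m)).
Proof.
  intros H1. unfold tv. destruct I; [lia|]. simpl Nat.eqb. cbv iota.
  rewrite (proj2 (Nat.ltb_ge _ _)) by lia. reflexivity.
Qed.

Lemma ex_bd_hidden d1 d3 I mu mu' i : admissible d1 d3 I mu -> admissible d1 d3 I mu' ->
  (0 < i)%nat -> (i < I)%nat ->
  ex_series (fun m => l2norm (fun k => mu i m k - mu' i m k)).
Proof.
  intros [A1 [A2 A3]] [B1 [B2 B3]] H1 H2.
  apply (ex_series_le_R _ (fun m => 2 * (l2norm (mu i m) + l2norm (mu' i m)))).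
  - intros m. rewrite Rabs_pos_eq by apply l2norm_nonneg. apply l2_diff; auto.
  - apply ex_series_scal_R, ex_series_plus_R; auto.
Qed.

Lemma ex_bd_out d1 d3 I mu mu' : admissible d1 d3 I mu -> admissible d1 d3 I mu' ->
  (0 < I)%nat ->
  ex_series (fun m => eucl_norm d3 (fun k => mu I m k - mu' I m k)).
Proof.
  intros [A1 [A2 A3]] [B1 [B2 B3]] H1.
  apply (ex_series_le_R _ (fun m => 2 * (eucl_norm d3 (mu I m) + eucl_norm d3 (mu' I m)))).
  - intros m. rewrite Rabs_pos_eq by apply eucl_nonneg. apply eucl_diff.
  - apply ex_series_scal_R, ex_series_plus_R; auto.
Qed.

Lemma tv_nonneg d1 d3 I mu mu' i : (1 <= I)%nat -> admissible d1 d3 I mu -> admissible d1 d3 I mu' ->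
  (i <= I)%nat -> 0 <= tv d1 d3 I i (fun m k => mu i m k - mu' i m k).
Proof.
  intros HI A B Hi. destruct (Nat.eq_dec i 0) as [->|H0].
  - rewrite tv_0 by auto. apply fsum_nonneg; intros; apply l2norm_nonneg.
  - destruct (Nat.eq_dec i I) as [->|H1].
    + rewrite tv_out by lia. apply Series_nonneg'; [intros; apply eucl_nonneg|].
      apply (ex_bd_out d1); auto; lia.
    + rewrite tv_hidden by lia. apply Series_nonneg'; [intros; apply l2norm_nonneg|].
      apply (ex_bd_hidden d1 d3 I); auto; lia.
Qed.

Lemma tv_le_dist d1 d3 I mu mu' i : (1 <= I)%nat -> admissible d1 d3 I mu -> admissible d1 d3 I mu' ->
  (i <= I)%nat -> tv d1 d3 I i (fun m k => mu i m k - mu' i m k) <= param_dist d1 d3 I mu mu'.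
Proof.
  intros HI A B Hi. unfold param_dist.
  apply (fsum_term (S I) (fun i => tv d1 d3 I i (fun m k => mu i m k - mu' i m k))); [|lia].
  intros m Hm. apply tv_nonneg; auto; lia.
Qed.

Definition Hid d1 d3 I (x : nat -> R) mu j :=
  exists M, 0 <= M /\ (forall k, Rabs (layers d1 mu x j k) <= M) /\
  forall eps, 0 < eps -> exists delta, 0 < delta /\
    forall x' mu', admissible d1 d3 I mu' ->
      eucl_norm d1 (fun k => x k - x' k) + param_dist d1 d3 I mu mu' < delta ->
      forall k, Rabs (layers d1 mu x j k - layers d1 mu' x' j k) <= eps.

Lemma layers_0 d1 mu x k : layers d1 mu x 0 k = fsum (S d1) (fun m => mu 0%nat m k * rho0 x m).
Proof. reflexivity. Qed.
Lemma layers_S d1 mu x j k : layers d1 mu x (S j) k =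
  Series (fun m => mu (S j) m k * rho (layers d1 mu x j) m).
Proof. reflexivity. Qed.

Lemma dist_split d1 d3 I (x x' : nat -> R) mu mu' delta : (1 <= I)%nat ->
  admissible d1 d3 I mu -> admissible d1 d3 I mu' ->
  eucl_norm d1 (fun k => x k - x' k) + param_dist d1 d3 I mu mu' < delta ->
  eucl_norm d1 (fun k => x k - x' k) < delta /\
  forall i, (i <= I)%nat -> tv d1 d3 I i (fun m k => mu i m k - mu' i m k) < delta.
Proof.
  intros HI A B H. pose proof (eucl_nonneg d1 (fun k => x k - x' k)).
  assert (0 <= param_dist d1 d3 I mu mu').
  { eapply Rle_trans; [apply (tv_nonneg d1 d3 I mu mu' 0)|apply tv_le_dist]; auto; lia. }
  split; [lra|]. intros i Hi. pose proof (tv_le_dist d1 d3 I mu mu' i HI A B Hi). lra.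
Qed.

Lemma hid_base d1 d3 I x mu : (1 <= I)%nat -> admissible d1 d3 I mu -> Hid d1 d3 I x mu 0.
Proof.
  intros HI A. pose proof A as [A1 [A2 A3]].
  set (C0 := 1 + fsum d1 (fun k => Rabs (x k))).
  set (B0 := fsum (S d1) (fun m => l2norm (mu 0%nat m))).
  assert (HC : 0 <= C0) by (unfold C0; pose proof (fsum_nonneg d1 (fun k => Rabs (x k)) (fun m _ => Rabs_pos (x m))); lra).
  assert (HB : 0 <= B0) by (apply fsum_nonneg; intros; apply l2norm_nonneg).
  exists (3 * C0 * B0). split; [apply Rmult_le_pos; lra|]. split.
  - intros k. rewrite ?layers_0, ?layers_S. apply fin_bound.
    + intros m _. apply coord_l2, A1; lia.
    + intros m Hm. apply rho0_bound; auto.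
  - intros eps Heps. destruct (choose_delta C0 B0 eps HC HB Heps) as [delta [Hd Hch]].
    exists delta. split; auto. intros x' mu' B Hdist k.
    destruct (dist_split d1 d3 I x x' mu mu' delta HI A B Hdist) as [Hx Ht].
    pose proof B as [B1 _]. specialize (Ht 0%nat ltac:(lia)). rewrite tv_0 in Ht by auto.
    rewrite ?layers_0, ?layers_S.
    eapply Rle_trans.
    + apply (fin_diff (S d1) _ _ _ _ (fun m => l2norm (mu 0%nat m))
         (fun m => l2norm (fun k => mu 0%nat m k - mu' 0%nat m k)) C0
         (eucl_norm d1 (fun k => x k - x' k))).
      * intros m _. apply coord_l2, A1; lia.
      * intros m _. apply (coord_l2 (fun k => mu 0%nat m k - mu' 0%nat m k)).
        apply sq_summable_diff; [apply A1| apply B1]; lia.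
      * intros m Hm. apply rho0_bound; auto.
      * intros m Hm. apply rho0_lip; auto.
    + apply Hch; auto. apply fsum_nonneg; intros; apply l2norm_nonneg. apply eucl_nonneg.
Qed.

Lemma hid_step d1 d3 I x mu j : (1 <= I)%nat -> admissible d1 d3 I mu -> (S j < I)%nat ->
  Hid d1 d3 I x mu j -> Hid d1 d3 I x mu (S j).
Proof.
  intros HI A Hj [M [HM [Hbd Hc]]]. pose proof A as [A1 [A2 A3]].
  set (C := 1 + M).
  set (B := Series (fun m => l2norm (mu (S j) m))).
  assert (Eb : ex_series (fun m => l2norm (mu (S j) m))) by (apply A2; lia).
  assert (HC : 0 <= C) by (unfold C; lra).
  assert (HB : 0 <= B) by (apply Series_nonneg'; auto; intros; apply l2norm_nonneg).
  exists (3 * C * B). split; [apply Rmult_le_pos; lra|]. split.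
  - intros k. rewrite ?layers_0, ?layers_S. apply ser_bound; auto.
    + intros m. apply coord_l2, A1; lia.
    + intros m. apply rho_bound; auto.
  - intros eps Heps. destruct (choose_delta C B eps HC HB Heps) as [d1' [Hd1 Hch]].
    destruct (Hc (d1' / 2) ltac:(lra)) as [d2 [Hd2 Hc2]].
    exists (Rmin d1' d2). split; [apply Rmin_pos; auto|]. intros x' mu' B' Hdist k.
    pose proof (Rmin_l d1' d2). pose proof (Rmin_r d1' d2).
    destruct (dist_split d1 d3 I x x' mu mu' _ HI A B' Hdist) as [Hx Ht].
    pose proof B' as [B1 _]. specialize (Ht (S j) ltac:(lia)). rewrite tv_hidden in Ht by lia.
    assert (Hl : forall k, Rabs (layers d1 mu x j k - layers d1 mu' x' j k) <= d1' / 2).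
    { apply Hc2; auto. lra. }
    rewrite ?layers_0, ?layers_S.
    eapply Rle_trans.
    + apply (ser_diff _ _ _ _ (fun m => l2norm (mu (S j) m))
         (fun m => l2norm (fun k => mu (S j) m k - mu' (S j) m k)) C (d1' / 2)).
      * intros m. apply coord_l2, A1; lia.
      * intros m. apply (coord_l2 (fun k => mu (S j) m k - mu' (S j) m k)).
        apply sq_summable_diff; [apply A1| apply B1]; lia.
      * auto.
      * apply (ex_bd_hidden d1 d3 I); auto; lia.
      * intros m. apply rho_bound; auto.
      * intros m. apply rho_lip; auto; lra.
    + apply Hch; try lra. apply Series_nonneg'; [intros; apply l2norm_nonneg|].
      apply (ex_bd_hidden d1 d3 I); auto; lia.
Qed.

Lemma hid_all d1 d3 I x mu : (1 <= I)%nat -> admissible d1 d3 I mu ->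
  forall j, (j < I)%nat -> Hid d1 d3 I x mu j.
Proof.
  intros HI A j. induction j; intros Hj.
  - apply hid_base; auto.
  - apply hid_step; auto. apply IHj; lia.
Qed.

Theorem proposition2 (d1 d3 I : nat) (HI : (1 <= I)%nat)
  (x : nat -> R) (mu : nat -> nat -> nat -> R) :
  admissible d1 d3 I mu ->
  forall eps : R, 0 < eps ->
  exists delta : R, 0 < delta /\
    forall (x' : nat -> R) (mu' : nat -> nat -> nat -> R),
      admissible d1 d3 I mu' ->
      eucl_norm d1 (fun k => x k - x' k) + param_dist d1 d3 I mu mu' < delta ->
      eucl_norm d3 (fun k => net d1 I mu x k - net d1 I mu' x' k) < eps.
Proof.
  intros A eps Heps.
  destruct I as [|j]; [lia|].
  destruct (hid_all d1 d3 (S j) x mu HI A j ltac:(lia)) as [M [HM [Hbd Hc]]].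
  pose proof A as [A1 [A2 A3]].
  set (eps' := eps / (INR d3 + 1)).
  pose proof (pos_INR d3).
  assert (He' : 0 < eps') by (apply Rdiv_lt_0_compat; lra).
  set (C := 1 + M).
  set (B := Series (fun m => eucl_norm d3 (mu (S j) m))).
  assert (Eb : ex_series (fun m => eucl_norm d3 (mu (S j) m))) by (apply A3; lia).
  assert (HC : 0 <= C) by (unfold C; lra).
  assert (HB : 0 <= B) by (apply Series_nonneg'; auto; intros; apply eucl_nonneg).
  destruct (choose_delta C B eps' HC HB He') as [d1' [Hd1 Hch]].
  destruct (Hc (d1' / 2) ltac:(lra)) as [d2 [Hd2 Hc2]].
  exists (Rmin d1' d2). split; [apply Rmin_pos; auto|]. intros x' mu' B' Hdist.
  pose proof (Rmin_l d1' d2). pose proof (Rmin_r d1' d2).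
  destruct (dist_split d1 d3 (S j) x x' mu mu' _ HI A B' Hdist) as [Hx Ht].
  specialize (Ht (S j) ltac:(lia)). rewrite tv_out in Ht by lia.
  assert (Hl : forall k, Rabs (layers d1 mu x j k - layers d1 mu' x' j k) <= d1' / 2).
  { apply Hc2; auto. lra. }
  assert (Hk : forall k, (k < d3)%nat ->
     Rabs (net d1 (S j) mu x k - net d1 (S j) mu' x' k) <= eps').
  { intros k Hk. unfold net. rewrite !layers_S.
    eapply Rle_trans.
    + apply (ser_diff _ _ _ _ (fun m => eucl_norm d3 (mu (S j) m))
         (fun m => eucl_norm d3 (fun k => mu (S j) m k - mu' (S j) m k)) C (d1' / 2)).
      * intros m. apply coord_eucl; auto.
      * intros m. apply (coord_eucl d3 (fun k => mu (S j) m k - mu' (S j) m k)); auto.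
      * auto.
      * apply (ex_bd_out d1 d3 (S j)); auto; lia.
      * intros m. apply rho_bound; auto.
      * intros m. apply rho_lip; auto; lra.
    + apply Hch; try lra. apply Series_nonneg'; [intros; apply eucl_nonneg|].
      apply (ex_bd_out d1 d3 (S j)); auto; lia. }
  eapply Rle_lt_trans; [apply eucl_le_sum|].
  eapply Rle_lt_trans; [apply (fsum_le d3 _ (fun _ => eps')); exact Hk|].
  rewrite fsum_const. unfold eps'.
  replace (INR d3 * (eps / (INR d3 + 1))) with (eps * (INR d3 / (INR d3 + 1))) by (field; lra).
  assert (INR d3 / (INR d3 + 1) < 1).
  { apply (Rmult_lt_reg_r (INR d3 + 1)); [lra|]. unfold Rdiv. rewrite Rmult_assoc, Rinv_l by lra. lra. }
  nra.
Qed.
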